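(* If $X$ is a planar Peano continuum which is not semilocally simply connected at $x\in X$, then for every $\epsilon>0$ there exists a closed disk neighborhood $D$ of $x$ in $\mathbb R^2$ of diameter less than $\epsilon$ whose boundary circle is not contained in $X$.
   Context: A planar Peano continuum is a compact, connected, locally path connected subspace of $\mathbb R^2$. *)

(* Defs.v *)
(* The plane R^2 is modelled as R * R (product topology,
   which is the Euclidean topology) for an arbitrary R : realType. *)
From HB Require Import structures.
From mathcomp Require Import all_boot all_order all_algebra.
From mathcomp Require Import all_classical all_reals all_analysis.
Set Implicit Arguments. Unset Strict Implicit. Unset Printing Implicit Defensive.
Import Order.TTheory GRing.Theory Num.Theory.
Import numFieldNormedType.Exports.
Local Open Scope classical_set_scope.
Local Open Scope ring_scope.

Section Defs.
Variable R : realType.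
Notation P := (R * R)%type.

Definition sqdist (p q : P) : R := (p.1 - q.1) ^+ 2 + (p.2 - q.2) ^+ 2.

Definition path_in (X : set P) (f : R -> P) : Prop :=
  {within `[0, 1%R], continuous f} /\ f @` `[0, 1%R] `<=` X.

Definition loop_in (X : set P) (x : P) (f : R -> P) : Prop :=
  path_in X f /\ f 0 = x /\ f 1 = x.

Definition nullhomotopic_in (X : set P) (x : P) (f : R -> P) : Prop :=
  exists H : R * R -> P,
    [/\ {within `[0, 1%R] `*` `[0, 1%R], continuous H},
        H @` (`[0, 1%R] `*` `[0, 1%R]) `<=` X,
        (forall s, s \in `[0, 1] -> H (s, 0) = f s /\ H (s, 1) = x) &
        (forall t, t \in `[0, 1] -> H (0, t) = x /\ H (1, t) = x)].

Definition semilocally_simply_connected_at (X : set P) (x : P) : Prop :=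
  exists U : set P, nbhs x U /\
    forall f, loop_in (X `&` U) x f -> nullhomotopic_in X x f.

Definition locally_path_connected (X : set P) : Prop :=
  forall x, X x -> forall U : set P, nbhs x U ->
    exists V : set P, nbhs x V /\
      forall y z, (X `&` V) y -> (X `&` V) z ->
        exists f, path_in (X `&` U) f /\ f 0 = y /\ f 1 = z.

Definition planar_peano_continuum (X : set P) : Prop :=
  [/\ compact X, connected X & locally_path_connected X].

End Defs.

(* Main.v *)
Require Import Defs.
From HB Require Import structures.
From mathcomp Require Import all_boot all_order all_algebra.
From mathcomp Require Import all_classical all_reals all_analysis.
Import Order.TTheory GRing.Theory Num.Theory.
Import numFieldNormedType.Exports.
From mathcomp Require Import ring lra.
Local Open Scope classical_set_scope.
Local Open Scope ring_scope.

Lemma fst_within (T U : topologicalType) (A : set T) (B : set U) (p : T * U) :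
  fst @ within (A `*` B) (nbhs p) --> within A (nbhs p.1).
Proof.
move=> W /= hW.
have : (fst @ nbhs p) (fun y => A y -> W y) by apply: cvg_fst.
rewrite /= /within/= nbhs_simpl /=.
apply: filterS => q H [Aq Bq]; exact: H.
Qed.

Lemma straight_homotopy (R : realType) (Y : set (R * R)) (x : R * R) (d : R) f :
  (forall y, sqdist y x < d ^+ 2 -> Y y) ->
  loop_in (Y `&` [set y | sqdist y x < d ^+ 2]) x f -> nullhomotopic_in Y x f.
Proof.
move=> hY [[hf himg] [f0 f1]].
pose H := fun q : R * R => ((1 - q.2) * (f q.1).1 + q.2 * x.1,
                            (1 - q.2) * (f q.1).2 + q.2 * x.2).
exists H; split.
- have hc := @subspace_continuousP (R * R)%type (`[0, 1%R] `*` `[0, 1%R]) (R * R)%type H.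
  apply: hc.2 => p Ap.
  have cf : f @ within `[0, 1%R] (nbhs p.1) --> f p.1.
    by move/subspace_continuousP : hf; apply; case: Ap.
  have c1 : (fun q : R * R => (f q.1)) @ within (`[0, 1%R] `*` `[0, 1%R]) (nbhs p)
     --> f p.1.
    have c1p := cvg_comp fst f (fst_within _ _ _ _ p) cf. exact: c1p.
  have c2 : (fun q : R * R => q.2) @ within (`[0, 1%R] `*` `[0, 1%R]) (nbhs p)
     --> p.2.
    move=> W /= hW; have : (snd @ nbhs p) W by apply: cvg_snd. rewrite /within /= nbhs_simpl. by apply: filterS => q Hq _; exact: Hq.
  have c1a : (fun q : R * R => (f q.1).1) @ within (`[0, 1%R] `*` `[0, 1%R]) (nbhs p)
     --> (f p.1).1.
    exact: (cvg_comp (fun q : R * R => f q.1) fst c1 (@cvg_fst _ _ _ _ _)).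
  have c1b : (fun q : R * R => (f q.1).2) @ within (`[0, 1%R] `*` `[0, 1%R]) (nbhs p)
     --> (f p.1).2.
    exact: (cvg_comp (fun q : R * R => f q.1) snd c1 (@cvg_snd _ _ _ _ _)).
  rewrite /H /=; refine (@cvg_pair _ _ _ _ (nbhs _) (nbhs _) _ _ _ _ _ _ _).
    apply: cvgD; apply: cvgM => //; try apply: cvgB => //; exact: cvg_cst.
  apply: cvgD; apply: cvgM => //; try apply: cvgB => //; exact: cvg_cst.
- move=> _ [[s t] [/= Hs Ht] <-].
  have [_ ] := himg (f s) (ex_intro2 _ _ s Hs erefl).
  rewrite /= => hfs; apply: hY.
  move: Ht; rewrite in_itv /= => /andP[t0 t1].
  rewrite /sqdist /H /= in hfs *.
  set a := (f s).1 - x.1 in hfs *; set b := (f s).2 - x.2 in hfs *.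
  have -> : (1 - t) * (f s).1 + t * x.1 - x.1 = (1 - t) * a by rewrite /a; ring.
  have -> : (1 - t) * (f s).2 + t * x.2 - x.2 = (1 - t) * b by rewrite /b; ring.
  apply: le_lt_trans hfs.
  rewrite !exprMn -mulrDr.
  apply: ler_piMl; first by rewrite addr_ge0 // sqr_ge0.
  rewrite exprn_ile1 //; lra.
- move=> s _; rewrite /H /=; split.
    by case: (f s) => a b /=; congr (_, _); ring.
  by rewrite subrr !mul0r !add0r !mul1r -surjective_pairing.
- move=> t _; rewrite /H /= f0 f1; split.
    by apply: injective_projections => /=; ring.
  by apply: injective_projections => /=; ring.
Qed.

Theorem lemmaA3 (R : realType) (X : set (R * R)) (x : R * R) :
  planar_peano_continuum X -> X x ->
  ~ semilocally_simply_connected_at X x ->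
  forall eps : R, 0 < eps ->
    exists (c : R * R) (r : R),
      [/\ 0 < r, sqdist x c < r ^+ 2, 2 * r < eps &
          exists y : R * R, sqdist y c = r ^+ 2 /\ ~ X y].
Proof.
move=> _ Xx nssc eps eps0.
apply: contrapT => hn; apply: nssc.
pose d := eps / 2.
have d0 : 0 < d by rewrite /d; lra.
have hY : forall y, sqdist y x < d ^+ 2 -> X y.
  move=> y hy; apply: contrapT => nXy; apply: hn.
  have [yx|yx] := eqVneq y x; first by rewrite yx in nXy.
  have sq0 : 0 <= sqdist y x by rewrite /sqdist addr_ge0 // sqr_ge0.
  have sqn0 : sqdist y x != 0.
    apply: contraNneq yx; rewrite /sqdist => /eqP.
    rewrite paddr_eq0 ?sqr_ge0 // !sqrf_eq0 !subr_eq0 => /andP[/eqP h1 /eqP h2].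
    by apply/eqP; apply: injective_projections.
  have sqp : 0 < sqdist y x by rewrite lt_def sqn0.
  exists x, (Num.sqrt (sqdist y x)); split.
  - by rewrite sqrtr_gt0.
  - by rewrite sqr_sqrtr // /sqdist !subrr expr0n /= addr0.
  - have : Num.sqrt (sqdist y x) < d.
      by rewrite -(ger0_norm (ltW d0)) -sqrtr_sqr ltr_sqrt // exprn_gt0.
    rewrite /d => h; lra.
  - by exists y; split => //; rewrite sqr_sqrtr.
exists [set y | sqdist y x < d ^+ 2]; split; last first.
  by move=> f hf; exact: (straight_homotopy _ _ _ _ _ hY hf).
apply/nbhs_ballP; exists (d / 2); first by rewrite /=; lra.
move=> y [/= b1 b2].
move: b1 b2; rewrite /ball /= => /ltr_normlP [h1 h2] /ltr_normlP [h3 h4].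
rewrite /sqdist; nra.
Qed.
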